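(* Let $\mathcal{X}$ be a compact metric space and $k:\mathcal{X}^2\to\mathbb{R}$ a continuous, universal kernel with $\sup_{x\in\mathcal{X}}\sqrt{k(x,x)}\le K<\infty$, and let $\mathcal{H}$ be its reproducing kernel Hilbert space. Let $\ell:\mathbb{R}\to\mathbb{R}$ be non-decreasing, convex and non-negative, and suppose that for every $M>0$ there is $z_0$ such that $g\ge M$ for all $z\ge z_0$ and all $g\in\partial\ell(z)$. Let $(x_1,y_1),\ldots,(x_{m_1},y_{m_1})\in\mathcal{X}\times\{+1,-1\}$, let $M_p=\{i:y_i=+1\}$, $M_n=\{i:y_i=-1\}$, and suppose both are non-empty. Let $\lambda>0$. Then the problem $$\min_{f\in\mathcal{H},\,b\in\mathbb{R},\,\rho\in\mathbb{R}}\ -2\rho+\frac{1}{m_1}\sum_{i=1}^{m_1}\ell\big(\rho-y_i(f(x_i)+b)\big)\quad\text{subject to }\|f\|_{\mathcal{H}}^2\le\lambda^2$$ has an optimal solution. Moreover there is no duality gap: its optimal value equals $$-\inf\Big\{c_p+c_n+\lambda\|f_p-f_n\|_{\mathcal{H}}\;:\;c_p,c_n\in\mathbb{R},\ f_p\in\mathcal{U}_p[c_p],\ f_n\in\mathcal{U}_n[c_n]\Big\},$$ where for $o\in\{p,n\}$ and $c\in\mathbb{R}$, $$\mathcal{U}_o[c]=\Big\{\sum_{i\in M_o}\alpha_i k(\cdot,x_i)\;:\;\sum_{i\in M_o}\alpha_i=1,\ \alpha_i\ge0\ (i\in M_o),\ \frac{1}{m_1}\sum_{i\in M_o}\ell^*(m_1\alpha_i)\le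 c\Big\},$$ i.e. the Lagrangian dual of the first problem is this minimum-distance problem between the uncertainty sets.
   Context: A kernel is universal if its RKHS is dense in the space of continuous functions on $\mathcal{X}$ with respect to the supremum norm. $\partial\ell(z)$ is the subdifferential of $\ell$ at $z$, and $\ell^*(x)=\sup_{z\in\mathbb{R}}\{xz-\ell(z)\}$ is the convex conjugate. *)

(* Defs.v *)
From HB Require Import structures.
From mathcomp Require Import all_boot all_order all_algebra.
From mathcomp Require Import all_classical all_reals all_analysis.
Set Implicit Arguments. Unset Strict Implicit. Unset Printing Implicit Defensive.
Import Order.TTheory GRing.Theory Num.Theory.
Import numFieldNormedType.Exports.
Local Open Scope classical_set_scope.
Local Open Scope ring_scope.

Section Defs.
Variables (R : realType) (X : Type).

Definition hnorm (ip : (X -> R) -> (X -> R) -> R) (f : X -> R) : R :=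
  Num.sqrt (ip f f).

Record is_RKHS (k : X -> X -> R) (Hs : set (X -> R))
    (ip : (X -> R) -> (X -> R) -> R) : Prop := {
  rkhs_zero : Hs (fun _ => 0);
  rkhs_add : forall f g, Hs f -> Hs g -> Hs (fun x => f x + g x);
  rkhs_scale : forall (a : R) f, Hs f -> Hs (fun x => a * f x);
  rkhs_sym : forall f g, Hs f -> Hs g -> ip f g = ip g f;
  rkhs_lin : forall (a : R) f g h, Hs f -> Hs g -> Hs h ->
      ip (fun x => a * f x + g x) h = a * ip f h + ip g h;
  rkhs_pos : forall f, Hs f -> 0 <= ip f f;
  rkhs_def : forall f, Hs f -> ip f f = 0 -> f = (fun _ => 0);
  rkhs_complete : forall u : nat -> (X -> R), (forall n, Hs (u n)) ->
      (forall e : R, 0 < e -> exists N, forall m n, (N <= m)%N -> (N <= n)%N ->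
          hnorm ip (fun x => u m x - u n x) < e) ->
      exists f, Hs f /\ (forall e : R, 0 < e -> exists N, forall n, (N <= n)%N ->
          hnorm ip (fun x => u n x - f x) < e);
  rkhs_kernel_in : forall y, Hs (fun x => k x y);
  rkhs_reproducing : forall f y, Hs f -> f y = ip f (fun x => k x y)
}.

Definition universal_space {T : topologicalType} (Hs : set (T -> R)) : Prop :=
  forall g : T -> R, continuous g -> forall e : R, 0 < e ->
    exists f, Hs f /\ forall x, `|g x - f x| < e.

Definition convex_fun (l : R -> R) : Prop :=
  forall x y t : R, 0 <= t -> t <= 1 ->
    l (t * x + (1 - t) * y) <= t * l x + (1 - t) * l y.

Definition subgrad (l : R -> R) (z g : R) : Prop :=
  forall w : R, l z + g * (w - z) <= l w.

Definition fconj (l : R -> R) (x : R) : \bar R :=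
  ereal_sup [set ((x * z - l z)%:E) | z in [set: R]].

End Defs.

Section Problem.
Variables (R : realType) (X : Type).
Variables (k : X -> X -> R) (l : R -> R) (m1 : nat)
          (xs : 'I_m1 -> X) (y : 'I_m1 -> R).

Definition primal_obj (f : X -> R) (b rho : R) : R :=
  - (2 * rho) + m1%:R^-1 * \sum_(i < m1) l (rho - y i * (f (xs i) + b)).

(* uncertainty set U_o[c] with M_o = [i | y i = s] (s = 1 for p, s = -1 for n) *)
Definition Uset (s c : R) : set (X -> R) :=
  [set f | exists alpha : 'I_m1 -> R,
     (forall i, y i = s -> 0 <= alpha i) /\
     \sum_(i < m1 | y i == s) alpha i = 1 /\
     ((m1%:R^-1)%:E * \sum_(i < m1 | y i == s) fconj l (m1%:R * alpha i)
        <= c%:E)%E /\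
     f = (fun x => \sum_(i < m1 | y i == s) alpha i * k x (xs i))].

End Problem.

(* Main.v *)
Require Import Defs.
From HB Require Import structures.
From mathcomp Require Import all_boot all_order all_algebra.
From mathcomp Require Import all_classical all_reals all_analysis.
From mathcomp.algebra_tactics Require Import ring lra.
Import Order.TTheory GRing.Theory Num.Theory.
Import numFieldNormedType.Exports.
Local Open Scope classical_set_scope.
Local Open Scope ring_scope.
Section All.
Variables (R : realType) (Xt : Type) (k : Xt -> Xt -> R) (Hs : set (Xt -> R))
  (ip : (Xt -> R) -> (Xt -> R) -> R) (l : R -> R) (m1 : nat)
  (xs : 'I_m1 -> Xt) (ys : 'I_m1 -> R) (lambda : R).
Hypothesis HR : is_RKHS k Hs ip.
Hypothesis lmono : {homo l : a b / a <= b}.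
Hypothesis lconv : convex_fun l.
Hypothesis lpos : forall z, 0 <= l z.
Hypothesis lgrow : forall M : R, 0 < M -> exists z0 : R, forall z g : R,
      z0 <= z -> subgrad l z g -> M <= g.
Hypothesis hy : forall i, ys i = 1 \/ ys i = -1.
Hypothesis hpos : exists i, ys i = 1.
Hypothesis hneg : exists i, ys i = -1.
Hypothesis lam0 : 0 < lambda.

Lemma lediv (u v x y : R) : 0 < u -> 0 < v -> x * v <= y * u -> x / u <= y / v.
Proof. by move=> hu hv h; rewrite ler_pdivrMr// mulrAC ler_pdivlMr. Qed.

Lemma master (a b c : R) : a < b -> b < c ->
  (c - a) * l b <= (c - b) * l a + (b - a) * l c.
Proof.
move=> ab bc.
have ca : 0 < c - a by lra.
set t := (c - b) / (c - a).
have t0 : 0 <= t by apply: divr_ge0; lra.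
have t1 : t <= 1 by rewrite /t ler_pdivrMr //; lra.
have := lconv a c t t0 t1.
have -> : t * a + (1 - t) * c = b by rewrite /t; field; lra.
move=> h.
have E : (c - b) * l a + (b - a) * l c = (c - a) * (t * l a + (1 - t) * l c).
  by rewrite /t; field; lra.
by rewrite E ler_pM2l.
Qed.

Definition q (z h : R) := (l (z + h) - l z) / h.
Definition p (z h : R) := (l z - l (z - h)) / h.

Lemma q_mono (z h h' : R) : 0 < h -> h < h' -> q z h <= q z h'.
Proof.
move=> h0 hh; rewrite /q; apply: lediv; try lra.
have := master (z) (z+h) (z+h'); lra.
Qed.

Lemma p_q (z h h' : R) : 0 < h -> 0 < h' -> p z h <= q z h'.
Proof.
move=> h0 h1; rewrite /q /p; apply: lediv; try lra.
have := master (z-h) (z) (z+h'); lra.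
Qed.

Lemma p_mono (z h h' : R) : 0 < h -> h < h' -> p z h' <= p z h.
Proof.
move=> h0 hh; rewrite /p; apply: lediv; try lra.
have := master (z-h') (z-h) (z); lra.
Qed.

Definition Qs (z : R) := [set q z h | h in [set h : R | 0 < h]].
Definition Ps (z : R) := [set p z h | h in [set h : R | 0 < h]].
Definition Dp (z : R) := inf (Qs z).
Definition Dm (z : R) := sup (Ps z).

Lemma Qs_q (z h : R) : 0 < h -> Qs z (q z h).
Proof. by move=> h0; exists h. Qed.
Lemma Ps_p (z h : R) : 0 < h -> Ps z (p z h).
Proof. by move=> h0; exists h. Qed.

Lemma Qs_inf (z : R) : has_inf (Qs z).
Proof.
split; first by exists (q z 1); exact: Qs_q ltr01.
exists (p z 1) => _ [h h0 <-]; exact: p_q.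
Qed.

Lemma Ps_sup (z : R) : has_sup (Ps z).
Proof.
split; first by exists (p z 1); exact: Ps_p ltr01.
exists (q z 1) => _ [h h0 <-]; exact: p_q.
Qed.

Lemma Dp_le_q {z h : R} : 0 < h -> Dp z <= q z h.
Proof. by move=> h0; apply: (ge_inf (Qs_inf z).2); exact: Qs_q. Qed.

Lemma p_le_Dm {z h : R} : 0 < h -> p z h <= Dm z.
Proof. by move=> h0; apply: (sup_upper_bound (Ps_sup z)); exact: Ps_p. Qed.

Lemma p_le_Dp {z h : R} : 0 < h -> p z h <= Dp z.
Proof.
move=> h0; apply: lb_le_inf; first by exists (q z 1); exact: Qs_q ltr01.
move=> _ [h' h1 <-]; exact: p_q.
Qed.

Lemma Dm_le_q {z h : R} : 0 < h -> Dm z <= q z h.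
Proof.
move=> h0; apply: ge_sup; first by exists (p z 1); exact: Ps_p ltr01.
move=> _ [h' h1 <-]; exact: p_q.
Qed.

Lemma Dm_le_Dp (z : R) : Dm z <= Dp z.
Proof.
apply: ge_sup; first by exists (p z 1); exact: Ps_p ltr01.
move=> _ [h' h1 <-]; exact: p_le_Dp.
Qed.

Lemma Dp_Dm_lt {z z' : R} : z < z' -> Dp z <= Dm z'.
Proof.
move=> zz; have h0 : 0 < z' - z by lra.
apply: le_trans (Dp_le_q h0) _; apply: le_trans _ (p_le_Dm h0).
have E1 : z + (z' - z) = z' by ring.
have E2 : z' - (z' - z) = z by ring.
by rewrite /q /p E1 E2.
Qed.

Lemma Dp_mono {z z' : R} : z <= z' -> Dp z <= Dp z'.
Proof.
move=> hz; have [zz|zz|<-] := ltgtP z z'; [|lra|done].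
exact: le_trans (Dp_Dm_lt zz) (Dm_le_Dp z').
Qed.

Lemma Dm_mono {z z' : R} : z <= z' -> Dm z <= Dm z'.
Proof.
move=> hz; have [zz|zz|<-] := ltgtP z z'; [|lra|done].
exact: le_trans (Dm_le_Dp z) (Dp_Dm_lt zz).
Qed.

Lemma subgradI {z g : R} : Dm z <= g -> g <= Dp z -> subgrad l z g.
Proof.
move=> h1 h2 w; have [wz|wz|->] := ltgtP w z; last by rewrite subrr mulr0 addr0.
- have h0 : 0 < z - w by lra.
  have := le_trans (p_le_Dm (z:=z) h0) h1; rewrite /p (_ : z - (z - w) = w); last by ring.
  rewrite ler_pdivrMr // => H; nra.
- have h0 : 0 < w - z by lra.
  have := le_trans h2 (Dp_le_q h0); rewrite /q (_ : z + (w - z) = w); last by ring.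
  rewrite ler_pdivlMr // => H; nra.
Qed.

Lemma Dp_ge0 (z : R) : 0 <= Dp z.
Proof.
apply: lb_le_inf; first by exists (q z 1); exact: Qs_q ltr01.
move=> _ [h h0 <-]; have {}h0 : 0 < h := h0.
rewrite /q; apply: divr_ge0; last exact: ltW.
rewrite subr_ge0; apply: lmono; lra.
Qed.

Lemma Dm_ge0 (z : R) : 0 <= Dm z.
Proof.
apply: le_trans (p_le_Dm (z:=z) ltr01); rewrite /p; apply: divr_ge0; last exact: ler01.
rewrite subr_ge0; apply: lmono; lra.
Qed.

Lemma Dp_small {z : R} : z < 0 -> Dp z <= l 0 / (- z).
Proof.
move=> z0; have h0 : 0 < - z by lra.
apply: le_trans (Dp_le_q h0) _; rewrite /q (_ : z + - z = 0); last by ring.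
by apply: lediv => //; have := lpos z; nra.
Qed.

Lemma Dp_grow {M : R} : 0 < M -> exists z0, forall z, z0 <= z -> M <= Dp z.
Proof.
move=> M0; have [z0 Hz] := lgrow M M0; exists z0 => z zz.
by apply: Hz zz _; apply: subgradI => //; exact: Dm_le_Dp.
Qed.

Lemma Dp_rcont (z : R) {e : R} : 0 < e -> exists2 d, 0 < d & Dp (z + d) <= Dp z + e.
Proof.
move=> e0; have e2 : 0 < e / 2 by lra.
have [_ [h h0 <-] Hh] := inf_adherent e2 (Qs_inf z).
have {}h0 : 0 < h := h0.
exists (h / 2); first by apply: divr_gt0.
have h2 : 0 < h / 2 by apply: divr_gt0.
apply: le_trans (Dp_le_q (z:=z + h / 2) h2) _.
have := Dp_le_q (z:=z) h2.
rewrite /q (_ : z + h / 2 + h / 2 = z + h); last by field.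
move: Hh; rewrite /q.
set A := l (z + h); set B := l (z + h / 2); set C := l z.
move=> H1 H2.
have E1 : (A - B) / (h / 2) = 2 * ((A - C) / h) - (B - C) / (h / 2).
  by field; lra.
rewrite E1; lra.
Qed.

Lemma Dm_lcont (z : R) {e : R} : 0 < e -> exists2 d, 0 < d & Dm z - e <= Dp (z - d).
Proof.
move=> e0; have e2 : 0 < e / 2 by lra.
have [_ [h h0 <-] Hh] := sup_adherent e2 (Ps_sup z).
change (sup (Ps z)) with (Dm z) in Hh.
have {}h0 : 0 < h := h0.
exists (h / 2); first by apply: divr_gt0.
have h2 : 0 < h / 2 by apply: divr_gt0.
apply: le_trans _ (p_le_Dp (z:=z - h / 2) h2).
have := p_le_Dm (z:=z) h2.
rewrite /p (_ : z - h / 2 - h / 2 = z - h); last by field.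
move: Hh; rewrite /p.
set A := l (z - h); set B := l (z - h / 2); set C := l z.
move=> H1 H2.
have E1 : (B - A) / (h / 2) = 2 * ((C - A) / h) - (C - B) / (h / 2).
  by field; lra.
rewrite E1; lra.
Qed.


Definition lcS (x : R) := [set x * z - l z | z in [set: R]].
Definition lc (x : R) := sup (lcS x).

Lemma lc_bounded {x : R} : 0 <= x -> exists B, forall z, x * z - l z <= B.
Proof.
move=> x0; have x1 : 0 < x + 1 by lra.
have [z0 Hz] := Dp_grow x1.
have sg := subgradI (Dm_le_Dp z0) (lexx (Dp z0)).
have g1 := Hz z0 (lexx z0).
exists (x * z0) => z.
have l0 := lpos z; have l1 := lpos z0.
have [zz|zz] := leP z0 z.
- have := sg z; nra.
- nra.
Qed.

Lemma lc_has_sup {x : R} : 0 <= x -> has_sup (lcS x).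
Proof.
move=> x0; split; first by exists (x * 0 - l 0); exists 0.
have [B HB] := lc_bounded x0; exists B => _ [z _ <-]; exact: HB.
Qed.

Lemma lc_ub {x : R} (z : R) : 0 <= x -> x * z - l z <= lc x.
Proof. by move=> x0; apply: (sup_upper_bound (lc_has_sup x0)); exists z. Qed.

Lemma lc_le (x c : R) : (forall z, x * z - l z <= c) -> lc x <= c.
Proof.
move=> H; apply: ge_sup; first by exists (x * 0 - l 0); exists 0.
by move=> _ [z _ <-]; exact: H.
Qed.

Lemma lc_eq {z g : R} : Dm z <= g -> g <= Dp z -> lc g = g * z - l z.
Proof.
move=> h1 h2; have g0 : 0 <= g := le_trans (Dm_ge0 z) h1.
have sg := subgradI h1 h2.
apply/eqP; rewrite eq_le lc_ub // andbT; apply: lc_le => w.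
have := sg w; lra.
Qed.

Lemma FY (x u : R) : 0 <= x -> x * u - lc x <= l u.
Proof. move=> x0; have := lc_ub u x0; lra. Qed.

Lemma lc_conv (a b t : R) : 0 <= a -> 0 <= b -> 0 <= t -> t <= 1 ->
  lc ((1 - t) * a + t * b) <= (1 - t) * lc a + t * lc b.
Proof.
move=> a0 b0 t0 t1; apply: lc_le => z.
have h1 := lc_ub z a0; have h2 := lc_ub z b0.
have t2 : 0 <= 1 - t by lra.
have e1 := ler_wpM2l t2 h1; have e2 := ler_wpM2l t0 h2.
have -> : ((1 - t) * a + t * b) * z - l z =
  (1 - t) * (a * z - l z) + t * (b * z - l z) by ring.
exact: lerD.
Qed.

Lemma fconj_lc (x : R) : 0 <= x -> fconj l x = (lc x)%:E.
Proof.
move=> x0; rewrite /fconj /lc.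
have -> : [set (x * z - l z)%:E | z in [set: R]] = EFin @` lcS x.
  by rewrite /lcS image_comp.
by rewrite ereal_sup_EFin //; case: (lc_has_sup x0).
Qed.

Lemma card_sum_le (I : finType) (J : pred I) (F : I -> R) (c : R) :
  0 <= c -> (forall i, J i -> F i <= c) -> \sum_(i | J i) F i <= c * #|I|%:R.
Proof.
move=> c0 H; apply: (le_trans (y := \sum_(i | J i) c)); first exact: ler_sum.
rewrite [X in _ <= X](_ : _ = \sum_(i : I) c); last by rewrite sumr_const mulr_natr.
by rewrite [X in _ <= X](bigID J) /= lerDl sumr_ge0.
Qed.

Lemma fin_delta (I : finType) (P : I -> R -> Prop) :
  (forall i, exists2 d, 0 < d & P i d) ->
  (forall i d d', 0 < d' -> d' <= d -> P i d -> P i d') ->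
  exists2 d, 0 < d & forall i, P i d.
Proof.
move=> H Hm.
have [D HD] : exists D : I -> R, forall i, 0 < D i /\ P i (D i).
  have [D HD] := @choice I R (fun i d => 0 < d /\ P i d) (fun i => let: ex_intro2 d h1 h2 := H i in ex_intro _ d (conj h1 h2)).
  by exists D.
have Dpos : 0 < \big[Order.min/1]_i D i.
  apply: (big_ind (fun x => 0 < x)) => //.
  - by move=> x y hx hyy; rewrite lt_min hx hyy.
  - by move=> i _; case: (HD i).
exists (\big[Order.min/1]_i D i) => // i.
case: (HD i) => h1 h2; apply: Hm h2 => //.
by rewrite (bigD1 i) //= ge_min lexx.
Qed.

Lemma oneD (I : finType) (J : pred I) (a : I -> R) (N : R) : 0 < N -> (exists i, J i) ->
  exists s (g : I -> R), (forall i, J i -> Dm (s + a i) <= g i /\ g i <= Dp (s + a i))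
     /\ \sum_(i | J i) g i = N.
Proof.
move=> N0 [i0 Ji0].
set cI := (#|I|%:R : R).
have cI0 : 0 < cI by rewrite ltr0n; apply/card_gt0P; exists i0.
set A := \sum_i `|a i|.
have Aa : forall i, - A <= a i <= A.
  move=> i; have h : `|a i| <= A by rewrite /A (bigD1 i) //= lerDl sumr_ge0.
  by rewrite -ler_norml.
pose Rs s := \sum_(i | J i) Dp (s + a i).
pose Lm s := \sum_(i | J i) Dm (s + a i).
have Rs_mono : forall s s', s <= s' -> Rs s <= Rs s'.
  by move=> s s' ss; apply: ler_sum => i _; apply: Dp_mono; lra.
pose T := [set s | Rs s < N].
set K0 := 2 * cI * l 0 / N.
have NK : N * K0 = 2 * cI * l 0 by rewrite /K0; field; lra.
have l00 := lpos 0.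
have K00 : 0 <= K0 by rewrite /K0; apply: divr_ge0; [nra|lra].
have Tne : T (- A - 1 - K0).
  rewrite /T /=.
  apply: (le_lt_trans (y := N / (2 * cI) * cI)); last first.
    have -> : N / (2 * cI) * cI = N / 2 by field; lra.
    lra.
  apply: card_sum_le; first by apply: divr_ge0; lra.
  move=> i _.
  have /andP [ai1 ai2] := Aa i.
  have neg : - A - 1 - K0 + a i < 0 by lra.
  apply: le_trans (Dp_small neg) _.
  apply: lediv; [lra|lra|].
  have u1 : 1 + K0 <= - (- A - 1 - K0 + a i) by lra.
  nra.
have [z0 Hz0] := Dp_grow N0.
have Tub : forall s, T s -> s <= z0 + A.
  move=> s Ts; rewrite leNgt; apply/negP => ss.
  have : N <= Rs s.
    rewrite /Rs (bigD1 i0) //=.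
    have /andP [ai1 ai2] := Aa i0.
    have : 0 <= \sum_(i | J i && (i != i0)) Dp (s + a i) by apply: sumr_ge0 => i _; exact: Dp_ge0.
    have : N <= Dp (s + a i0) by apply: Hz0; lra.
    lra.
  by rewrite /T /= in Ts; lra.
have hT : has_sup T.
  split; first by exists (- A - 1 - K0).
  by exists (z0 + A) => t Tt; exact: Tub.
set s := sup T.
have LmRs : Lm s <= Rs s by apply: ler_sum => i _; exact: Dm_le_Dp.
have C1 : N <= Rs s.
  rewrite leNgt; apply/negP => H.
  set e := (N - Rs s) / (2 * cI).
  have e0 : 0 < e by apply: divr_gt0; lra.
  have [d d0 Hd] : exists2 d, 0 < d & forall i, Dp (s + d + a i) <= Dp (s + a i) + e.
    apply: fin_delta => [i|i d1 d2 d20 d21 h].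
    - by have [d d0 Hd] := Dp_rcont (s + a i) e0; exists d => //; rewrite addrAC.
    - by apply: le_trans h; apply: Dp_mono; lra.
  have : T (s + d).
    rewrite /T /=; apply: (le_lt_trans (y := Rs s + e * cI)).
      apply: (le_trans (y := \sum_(i | J i) (Dp (s + a i) + e))); first by apply: ler_sum => i _.
      rewrite big_split /= lerD2l; apply: card_sum_le => //; exact: ltW.
    have -> : Rs s + e * cI = Rs s + (N - Rs s) / 2 by rewrite /e; field; lra.
    lra.
  move/(sup_upper_bound hT); rewrite -/s; lra.
have C2 : Lm s <= N.
  rewrite leNgt; apply/negP => H.
  set e := (Lm s - N) / (2 * cI).
  have e0 : 0 < e by apply: divr_gt0; lra.
  have [d d0 Hd] : exists2 d, 0 < d & forall i, Dm (s + a i) - e <= Dp (s - d + a i).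
    apply: fin_delta => [i|i d1 d2 d20 d21 h].
    - by have [d d0 Hd] := Dm_lcont (s + a i) e0; exists d => //; rewrite addrAC.
    - by apply: le_trans h _; apply: Dp_mono; lra.
  have [s' Ts' Hs'] := sup_adherent d0 hT.
  rewrite -/s in Hs'.
  have : Rs (s - d) <= Rs s' by apply: Rs_mono; lra.
  have : Lm s - e * cI <= Rs (s - d).
    apply: (le_trans (y := \sum_(i | J i) (Dm (s + a i) - e))); last by apply: ler_sum => i _.
    rewrite sumrB lerD2l lerN2; apply: card_sum_le => //; exact: ltW.
  have -> : Lm s - e * cI = Lm s - (Lm s - N) / 2 by rewrite /e; field; lra.
  rewrite /T /= in Ts'; lra.
set th := (N - Lm s) / (Rs s - Lm s).
have thE : th * (Rs s - Lm s) = N - Lm s.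
  have [hz|hz] := eqVneq (Rs s - Lm s) 0.
    by rewrite hz mulr0; lra.
  by rewrite /th divfK.
have th0 : 0 <= th <= 1.
  have [hz|hz] := eqVneq (Rs s - Lm s) 0.
    by rewrite /th hz invr0 mulr0 lexx ler01.
  have hp : 0 < Rs s - Lm s by rewrite lt_def hz /=; lra.
  rewrite /th divr_ge0 /=; [|lra|lra].
  by rewrite ler_pdivrMr // mul1r; lra.
have /andP [th1 th2] := th0.
exists s, (fun i => Dm (s + a i) + th * (Dp (s + a i) - Dm (s + a i))); split.
  move=> i _; have := Dm_le_Dp (s + a i); split; nra.
rewrite big_split /= -mulr_sumr sumrB -/(Rs s) -/(Lm s) thE; ring.
Qed.

Lemma Hs_lin (a b : R) {f g} : Hs f -> Hs g -> Hs (fun x => a * f x + b * g x).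
Proof.
move=> hf hg; apply: (rkhs_add HR); exact: (rkhs_scale HR).
Qed.

Lemma ip0l {h} : Hs h -> ip (fun _ => 0) h = 0.
Proof.
move=> hh; have := rkhs_lin HR 1 (rkhs_zero HR) (rkhs_zero HR) hh.
have -> : (fun x : Xt => 1 * (fun=> 0 : R) x + (fun=> 0) x) = (fun=> 0 : R).
  by apply: funext => x; rewrite mul1r addr0.
by move=> H; lra.
Qed.

Lemma ipLl (a b : R) {f g h} : Hs f -> Hs g -> Hs h ->
  ip (fun x => a * f x + b * g x) h = a * ip f h + b * ip g h.
Proof.
move=> hf hg hh; rewrite (rkhs_lin HR) //; last exact: (rkhs_scale HR).
congr (_ + _).
have := rkhs_lin HR b hg (rkhs_zero HR) hh.
have -> : (fun x : Xt => b * g x + (fun=> 0 : R) x) = (fun x => b * g x).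
  by apply: funext => x; rewrite addr0.
by rewrite ip0l // addr0.
Qed.

Lemma ipZl (a : R) {f h} : Hs f -> Hs h -> ip (fun x => a * f x) h = a * ip f h.
Proof.
move=> hf hh; have := ipLl a 0 hf (rkhs_zero HR) hh.
have -> : (fun x : Xt => a * f x + 0 * (fun=> 0 : R) x) = (fun x => a * f x).
  by apply: funext => x; rewrite mul0r addr0.
by rewrite mul0r addr0.
Qed.

Lemma ipLr (a b : R) {f g h} : Hs f -> Hs g -> Hs h ->
  ip h (fun x => a * f x + b * g x) = a * ip h f + b * ip h g.
Proof.
move=> hf hg hh; rewrite (rkhs_sym HR) ?ipLl //; last exact: Hs_lin.
by rewrite (rkhs_sym HR hf) // (rkhs_sym HR hg).
Qed.

Lemma ipq2 (a b : R) {f g} : Hs f -> Hs g ->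
  ip (fun x => a * f x + b * g x) (fun x => a * f x + b * g x)
  = a ^+ 2 * ip f f + 2 * a * b * ip f g + b ^+ 2 * ip g g.
Proof.
move=> hf hg; rewrite ipLl //; last exact: Hs_lin.
rewrite !ipLr // (rkhs_sym HR hg hf); ring.
Qed.

Definition hn f := Num.sqrt (ip f f).

Lemma CS2 {f g} : Hs f -> Hs g -> ip f g ^+ 2 <= ip f f * ip g g.
Proof.
move=> hf hg.
have [g0|g0] := eqVneq (ip g g) 0.
  have g0' : g = (fun _ => 0) by apply: (rkhs_def HR).
  rewrite g0' (rkhs_sym HR hf (rkhs_zero HR)) (ip0l hf) (ip0l (rkhs_zero HR)).
  by rewrite mulr0 expr2 mulr0.
have gp : 0 < ip g g by rewrite lt0r g0 /=; exact: (rkhs_pos HR hg).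
set t := - (ip f g / ip g g).
have := rkhs_pos HR (Hs_lin 1 t hf hg).
rewrite ipq2 // /t.
set c := ip f g; set G := ip g g; set Fq := ip f f.
have -> : 1 ^+ 2 * Fq + 2 * 1 * - (c / G) * c + (- (c / G)) ^+ 2 * G = Fq - c ^+ 2 / G.
  by field; rewrite gt_eqF.
by rewrite subr_ge0 ler_pdivrMr.
Qed.

Lemma hn_ge0 f : 0 <= hn f.
Proof. exact: sqrtr_ge0. Qed.

Lemma hn_sqr {f} : Hs f -> hn f ^+ 2 = ip f f.
Proof. by move=> hf; rewrite /hn sqr_sqrtr //; exact: (rkhs_pos HR). Qed.

Lemma CS {f g} : Hs f -> Hs g -> `|ip f g| <= hn f * hn g.
Proof.
move=> hf hg; rewrite -sqrtr_sqr /hn -sqrtrM; last exact: (rkhs_pos HR).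
rewrite ler_sqrt ?CS2 //.
by apply: mulr_ge0; exact: (rkhs_pos HR).
Qed.

Lemma CSle {f g} : Hs f -> Hs g -> ip f g <= hn f * hn g.
Proof. by move=> hf hg; apply: le_trans (ler_norm _) (CS hf hg). Qed.

Lemma Hs_sum (I : Type) (r : seq I) (P : pred I) (c : I -> R) (g : I -> Xt -> R) :
  (forall i, Hs (g i)) -> Hs (fun x => \sum_(i <- r | P i) c i * g i x).
Proof.
move=> hg; elim: r => [|i r IH].
  have -> : (fun x => \sum_(i <- [::] | P i) c i * g i x) = (fun _ => 0).
    by apply: funext => x; rewrite big_nil.
  exact: (rkhs_zero HR).
case: (boolP (P i)) => Pi.
  have -> : (fun x => \sum_(j <- i :: r | P j) c j * g j x) =
     (fun x => c i * g i x + 1 * (fun x => \sum_(j <- r | P j) c j * g j x) x).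
    by apply: funext => x; rewrite big_cons Pi mul1r.
  exact: Hs_lin.
have -> : (fun x => \sum_(j <- i :: r | P j) c j * g j x) =
   (fun x => \sum_(j <- r | P j) c j * g j x).
  by apply: funext => x; rewrite big_cons (negbTE Pi).
exact: IH.
Qed.

Lemma ip_sum (I : Type) (r : seq I) (P : pred I) (c : I -> R) (g : I -> Xt -> R) h :
  (forall i, Hs (g i)) -> Hs h ->
  ip h (fun x => \sum_(i <- r | P i) c i * g i x) = \sum_(i <- r | P i) c i * ip h (g i).
Proof.
move=> hg hh; elim: r => [|i r IH].
  have -> : (fun x => \sum_(i <- [::] | P i) c i * g i x) = (fun _ => 0).
    by apply: funext => x; rewrite big_nil.
  by rewrite big_nil (rkhs_sym HR hh (rkhs_zero HR)) ip0l.
case: (boolP (P i)) => Pi.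
  have -> : (fun x => \sum_(j <- i :: r | P j) c j * g j x) =
     (fun x => c i * g i x + 1 * (fun x => \sum_(j <- r | P j) c j * g j x) x).
    by apply: funext => x; rewrite big_cons Pi mul1r.
  by rewrite ipLr // ?IH ?big_cons ?Pi ?mul1r //; exact: Hs_sum.
have -> : (fun x => \sum_(j <- i :: r | P j) c j * g j x) =
   (fun x => \sum_(j <- r | P j) c j * g j x).
  by apply: funext => x; rewrite big_cons (negbTE Pi).
by rewrite IH big_cons (negbTE Pi).
Qed.

Definition nR : R := m1%:R.

Lemma nR0 : 0 < nR.
Proof. by case: hpos => i _; rewrite ltr0n; apply: leq_ltn_trans (ltn_ord i). Qed.

Lemma one_m1 : ((1 : R) == -1) = false.
Proof. by apply/eqP; lra. Qed.
Lemma m1_one : ((-1 : R) == 1) = false.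
Proof. by apply/eqP; lra. Qed.

Lemma split_sum (F : 'I_m1 -> R) :
  \sum_i F i = \sum_(i | ys i == 1) F i + \sum_(i | ys i == -1) F i.
Proof.
rewrite (bigID (fun i => ys i == 1)) /=; congr (_ + _); apply: eq_bigl => i.
by case: (hy i) => ->; rewrite ?eqxx ?one_m1 ?m1_one.
Qed.

Lemma sum_cls {G : 'I_m1 -> R} {c : R} :
  \sum_(i | ys i == 1) G i = c -> \sum_(i | ys i == -1) G i = c ->
  \sum_i G i = 2 * c /\ \sum_i G i * ys i = 0.
Proof.
move=> h1 h2; split; first by rewrite split_sum h1 h2; ring.
rewrite split_sum.
rewrite (eq_bigr (fun i => G i)); last by move=> i /eqP ->; rewrite mulr1.
rewrite [X in _ + X](eq_bigr (fun i => - G i)); last by move=> i /eqP ->; rewrite mulrN1.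
by rewrite sumrN h1 h2 subrr.
Qed.

Definition Sa (a : 'I_m1 -> R) : Prop :=
  [/\ forall i, 0 <= a i, \sum_(i | ys i == 1) a i = 1 & \sum_(i | ys i == -1) a i = 1].

Lemma Sa_le1 a i : Sa a -> a i <= 1.
Proof.
case=> a0 h1 h2; case: (hy i) => yi.
  rewrite -h1 (bigD1 i) /=; last by rewrite yi eqxx.
  by rewrite lerDl sumr_ge0.
rewrite -h2 (bigD1 i) /=; last by rewrite yi eqxx.
by rewrite lerDl sumr_ge0.
Qed.

Definition Ee (a : 'I_m1 -> R) := nR^-1 * \sum_i lc (nR * a i).
Definition Lf (f : Xt -> R) (a : 'I_m1 -> R) := - \sum_i a i * ys i * f (xs i) - Ee a.
Definition W (c : 'I_m1 -> R) := fun x => \sum_i c i * k x (xs i).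
Definition wa (a : 'I_m1 -> R) := W (fun i => a i * ys i).
Definition Dd (a : 'I_m1 -> R) := - (lambda * hn (wa a)) - Ee a.
Definition Fp (f : Xt -> R) (b rho : R) := primal_obj l xs ys f b rho.
Definition kap := \sum_i hn (fun x => k x (xs i)).

Lemma Hs_W c : Hs (W c).
Proof. by apply: (Hs_sum) => i; exact: (rkhs_kernel_in HR). Qed.

Lemma ip_W {f} c : Hs f -> ip f (W c) = \sum_i c i * f (xs i).
Proof.
move=> hf; rewrite /W (ip_sum) //; last by move=> i; exact: (rkhs_kernel_in HR).
by apply: eq_bigr => i _; rewrite -(rkhs_reproducing HR).
Qed.

Lemma kap_ge0 : 0 <= kap.
Proof. by apply: sumr_ge0 => i _; exact: hn_ge0. Qed.

Lemma W_bound c : (forall i, `|c i| <= 1) -> hn (W c) <= kap.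
Proof.
move=> hc; have hw := Hs_W c.
set w := W c.
have h1 : ip w w <= hn w * kap.
  rewrite {1}/w ip_W // /kap mulr_sumr; apply: ler_sum => i _.
  rewrite (rkhs_reproducing HR (xs i) hw).
  have hk := rkhs_kernel_in HR (xs i).
  apply: le_trans (ler_norm _) _; rewrite normrM.
  have := CS hw hk; have := normr_ge0 (ip w (fun x => k x (xs i))).
  have := hc i; have := hn_ge0 w; have := hn_ge0 (fun x => k x (xs i)).
  nra.
have h2 := hn_sqr hw; have h3 := hn_ge0 w; have h4 := kap_ge0.
nra.
Qed.

Lemma hn_f_le {f} : Hs f -> ip f f <= lambda ^+ 2 -> hn f <= lambda.
Proof.
move=> hf h; rewrite /hn -(ger0_norm (ltW lam0)) -sqrtr_sqr ler_sqrt //.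
exact: sqr_ge0.
Qed.

Lemma WD1 {f} b rho {a} : Sa a -> Lf f a <= Fp f b rho.
Proof.
move=> Sa'; case: (Sa') => a0 h1 h2.
have [s1 s2] := sum_cls h1 h2.
rewrite /Lf /Fp /primal_obj /Ee.
have n0 := nR0.
set u := fun i => rho - ys i * (f (xs i) + b).
have E1 : \sum_i nR * a i * u i = nR * (rho * \sum_i a i - \sum_i a i * ys i * f (xs i) - b * \sum_i a i * ys i).
  rewrite [rho * _]mulr_sumr [b * _]mulr_sumr -!sumrB mulr_sumr; apply: eq_bigr => i _; rewrite /u; ring.
rewrite s1 s2 in E1.
have H1 : \sum_i (nR * a i * u i - lc (nR * a i)) <= \sum_i l (u i).
  apply: ler_sum => i _; apply: FY => //; exact: mulr_ge0 (ltW n0) (a0 i).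
rewrite sumrB E1 in H1.
have ni : 0 < nR^-1 by rewrite invr_gt0.
have H3 := ler_wpM2l (ltW ni) H1.
rewrite mulrBr (mulrA nR^-1 nR) mulVf ?gt_eqF // mul1r in H3.
lra.
Qed.

Lemma WD2 {f a} : Hs f -> ip f f <= lambda ^+ 2 -> Sa a -> Dd a <= Lf f a.
Proof.
move=> hf hff Sa'; rewrite /Dd /Lf.
have : \sum_i a i * ys i * f (xs i) <= lambda * hn (wa a).
  rewrite -(ip_W _ hf); apply: le_trans (CSle hf (Hs_W _)) _.
  by apply: ler_wpM2r; [exact: hn_ge0|exact: hn_f_le].
rewrite /wa; lra.
Qed.


Lemma IL f : exists b rho a, Sa a /\ Fp f b rho = Lf f a.
Proof.
have n0 := nR0.
have hP : exists i, (fun i : 'I_m1 => ys i == 1) i.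
  by case: hpos => i hi; exists i; rewrite /= hi eqxx.
have hN : exists i, (fun i : 'I_m1 => ys i == -1) i.
  by case: hneg => i hi; exists i; rewrite /= hi eqxx.
have [s [g [Hg Sg]]] := @oneD _ (fun i => ys i == 1) (fun i => - f (xs i)) nR n0 hP.
have [t [g' [Hg' Sg']]] := @oneD _ (fun i => ys i == -1) (fun i => f (xs i)) nR n0 hN.
pose G i := if ys i == 1 then g i else g' i.
set b := (t - s) / 2; set rho := (s + t) / 2.
pose u i := rho - ys i * (f (xs i) + b).
have Hu : forall i, Dm (u i) <= G i /\ G i <= Dp (u i).
  move=> i; rewrite /G /u /b /rho; case: (hy i) => yi; rewrite yi ?eqxx ?m1_one.
    have -> : (s + t) / 2 - 1 * (f (xs i) + (t - s) / 2) = s + - f (xs i) by field.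
    by apply: Hg; rewrite /= yi eqxx.
  have -> : (s + t) / 2 - -1 * (f (xs i) + (t - s) / 2) = t + f (xs i) by field.
  by apply: Hg'; rewrite /= yi eqxx.
have G0 : forall i, 0 <= G i by move=> i; case: (Hu i) => h1 _; exact: le_trans (Dm_ge0 _) h1.
have SP : \sum_(i | ys i == 1) G i = nR.
  by rewrite -Sg; apply: eq_bigr => i /eqP yi; rewrite /G yi eqxx.
have SN : \sum_(i | ys i == -1) G i = nR.
  by rewrite -Sg'; apply: eq_bigr => i /eqP yi; rewrite /G yi m1_one.
have [s1 s2] := sum_cls SP SN.
exists b, rho, (fun i => G i / nR); split.
  split.
  - by move=> i; apply: divr_ge0 => //; exact: ltW.
  - by rewrite -mulr_suml SP divff // gt_eqF.
  - by rewrite -mulr_suml SN divff // gt_eqF.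
rewrite /Fp /primal_obj /Lf /Ee -/u.
have Hl : forall i, l (u i) = G i * u i - lc (G i).
  by move=> i; case: (Hu i) => h1 h2; rewrite (lc_eq h1 h2); ring.
rewrite (eq_bigr _ (fun i _ => Hl i)) sumrB.
have -> : \sum_i lc (nR * (G i / nR)) = \sum_i lc (G i).
  by apply: eq_bigr => i _; rewrite mulrC divfK // gt_eqF.
have -> : \sum_i G i * u i = rho * \sum_i G i - \sum_i G i * ys i * f (xs i) - b * \sum_i G i * ys i.
  rewrite [rho * _]mulr_sumr [b * _]mulr_sumr -!sumrB; apply: eq_bigr => i _; rewrite /u; ring.
have -> : \sum_i G i / nR * ys i * f (xs i) = nR^-1 * \sum_i G i * ys i * f (xs i).
  by rewrite mulr_sumr; apply: eq_bigr => i _; ring.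
rewrite s1 s2.
have -> : nR^-1 * (rho * (2 * nR) - \sum_i G i * ys i * f (xs i) - b * 0 - \sum_i lc (G i))
  = 2 * rho - nR^-1 * \sum_i G i * ys i * f (xs i) - nR^-1 * \sum_i lc (G i).
  by field; rewrite gt_eqF.
ring.
Qed.

Lemma Sa_conv {a b t} : Sa a -> Sa b -> 0 <= t -> t <= 1 -> Sa (fun i => (1 - t) * a i + t * b i).
Proof.
case=> a0 a1 a2 [b0 b1 b2] t0 t1; split.
- by move=> i; apply: addr_ge0; apply: mulr_ge0 => //; lra.
- by rewrite big_split /= -!mulr_sumr a1 b1; ring.
- by rewrite big_split /= -!mulr_sumr a2 b2; ring.
Qed.

Lemma wa_conv a b t : wa (fun i => (1 - t) * a i + t * b i) =
  (fun x => 1 * wa a x + t * W (fun i => (b i - a i) * ys i) x).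
Proof.
apply: funext => x; rewrite /wa /W mul1r mulr_sumr -big_split /=.
by apply: eq_bigr => i _; ring.
Qed.

Lemma diff_bound a b : Sa a -> Sa b -> forall i, `|(b i - a i) * ys i| <= 1.
Proof.
move=> Sa' Sb i; have := Sa_le1 a i Sa'; have := Sa_le1 b i Sb.
case: (Sa') => a0 _ _; case: (Sb) => b0 _ _; have := a0 i; have := b0 i.
rewrite normrM; case: (hy i) => ->; rewrite ?normrN normr1 mulr1 ler_norml => *; apply/andP; split; lra.
Qed.

Lemma Ee_conv {a b t} : Sa a -> Sa b -> 0 <= t -> t <= 1 ->
  Ee (fun i => (1 - t) * a i + t * b i) <= (1 - t) * Ee a + t * Ee b.
Proof.
case=> a0 _ _ [b0 _ _] t0 t1; rewrite /Ee.
have n0 := nR0.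
have -> : (1 - t) * (nR^-1 * \sum_i lc (nR * a i)) + t * (nR^-1 * \sum_i lc (nR * b i))
  = nR^-1 * \sum_i ((1 - t) * lc (nR * a i) + t * lc (nR * b i)).
  by rewrite big_split /= -!mulr_sumr; ring.
apply: ler_wpM2l; first by rewrite invr_ge0 ltW.
apply: ler_sum => i _.
have -> : nR * ((1 - t) * a i + t * b i) = (1 - t) * (nR * a i) + t * (nR * b i) by ring.
by apply: lc_conv => //; apply: mulr_ge0 => //; exact: ltW.
Qed.

Lemma Sa_ex : exists a, Sa a.
Proof.
case: hpos => ip0 hp0; case: hneg => in0 hn0.
have neq : ip0 != in0 by apply/eqP => e; move: hp0; rewrite e hn0; lra.
exists (fun i => if i == ip0 then 1 else if i == in0 then 1 else 0); split.
- by move=> i; case: ifP => _ //; case: ifP.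
- rewrite (bigD1 ip0) /=; last by rewrite hp0 eqxx.
  rewrite eqxx big1 ?addr0 // => i /andP [yi ni]; rewrite (negbTE ni).
  by case: ifP => // /eqP e; move: yi; rewrite e hn0 m1_one.
- rewrite (bigD1 in0) /=; last by rewrite hn0 eqxx.
  rewrite eqxx eq_sym (negbTE neq) big1 ?addr0 // => i /andP [yi ni]; rewrite (negbTE ni).
  by case: ifP => // /eqP e; move: yi; rewrite e hp0 one_m1.
Qed.

Lemma le_eps (x y : R) : (forall e : R, 0 < e -> x <= y + e) -> x <= y.
Proof. by move=> H; apply/ler_addgt0Pr => e e0; exact: H. Qed.

Lemma eta_small {c : R} : 0 < c -> exists N : nat, (N.+1%:R : R)^-1 < c.
Proof.
move=> c0; have ci : 0 <= c^-1 by rewrite invr_ge0 ltW.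
have := archi_boundP ci; set N := Num.bound _ => hN.
exists N; rewrite -div1r ltr_pdivrMr ?ltr0Sn //.
have : c^-1 < N.+1%:R by apply: lt_le_trans hN _; rewrite ler_nat.
rewrite -div1r ltr_pdivrMr //; lra.
Qed.

Lemma ip_sub {f g} : Hs f -> Hs g ->
  ip (fun x => f x - g x) (fun x => f x - g x) = ip f f - 2 * ip f g + ip g g.
Proof.
move=> hf hg; have -> : (fun x => f x - g x) = (fun x => 1 * f x + (-1) * g x).
  by apply: funext => x; ring.
rewrite ipq2 //; ring.
Qed.

Lemma ip_mid {f g} : Hs f -> Hs g ->
  4 * ip (fun x => 2^-1 * f x + 2^-1 * g x) (fun x => 2^-1 * f x + 2^-1 * g x)
  = ip f f + 2 * ip f g + ip g g.
Proof. by move=> hf hg; rewrite ipq2 //; field. Qed.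

Lemma ip_ge0 {f} : Hs f -> 0 <= ip f f.
Proof. exact: (rkhs_pos HR). Qed.

Lemma Hs0 : Hs (fun _ => 0).
Proof. exact: (rkhs_zero HR). Qed.

Lemma ip00 : ip (fun _ => 0) (fun _ => 0) = 0.
Proof. exact: ip0l Hs0. Qed.

Definition FS := [set r | exists f b rho, [/\ Hs f, ip f f <= lambda ^+ 2 & r = Fp f b rho]].

Lemma FS_inf : has_inf FS.
Proof.
split.
  exists (Fp (fun _ => 0) 0 0), (fun _ => 0), 0, 0; split => //; first exact: Hs0.
  by rewrite ip00 sqr_ge0.
have [a Sa'] := Sa_ex.
exists (Dd a) => _ [f [b [rho [hf hff ->]]]].
exact: le_trans (WD2 hf hff Sa') (WD1 b rho Sa').
Qed.

Definition Pst := inf FS.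

Lemma Pst_le f b rho : Hs f -> ip f f <= lambda ^+ 2 -> Pst <= Fp f b rho.
Proof. by move=> hf hff; apply: (ge_inf FS_inf.2); exists f, b, rho. Qed.

Definition Cset (e : R) := [set f | [/\ Hs f, ip f f <= lambda ^+ 2 & exists b rho, Fp f b rho <= Pst + e]].

Lemma Cset_ne {e : R} : 0 < e -> exists f, Cset e f.
Proof.
move=> e0; have [_ [f [b [rho [hf hff ->]]]] H] := inf_adherent e0 FS_inf.
by exists f; split => //; exists b, rho; apply: ltW.
Qed.

Lemma Cset_mono {e e' : R} {f} : e <= e' -> Cset e f -> Cset e' f.
Proof. by move=> ee [hf hff [b [rho H]]]; split => //; exists b, rho; lra. Qed.

Lemma Cset_mid {e : R} {f g} : Cset e f -> Cset e g -> Cset e (fun x => 2^-1 * f x + 2^-1 * g x).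
Proof.
move=> [hf hff [b1 [r1 H1]]] [hg hgg [b2 [r2 H2]]]; split.
- exact: Hs_lin.
- have := ip_mid hf hg; have := ip_sub hf hg; have := ip_ge0 (Hs_lin 1 (-1) hf hg).
  have -> : (fun x => 1 * f x + -1 * g x) = (fun x => f x - g x) by apply: funext => x; ring.
  lra.
- exists (2^-1 * b1 + 2^-1 * b2), (2^-1 * r1 + 2^-1 * r2).
  apply: (le_trans (y := 2^-1 * Fp f b1 r1 + 2^-1 * Fp g b2 r2)); last lra.
  rewrite /Fp /primal_obj.
  have n0 := nR0.
  have : \sum_i l (2^-1 * r1 + 2^-1 * r2 - ys i * (2^-1 * f (xs i) + 2^-1 * g (xs i) + (2^-1 * b1 + 2^-1 * b2)))
    <= 2^-1 * \sum_i l (r1 - ys i * (f (xs i) + b1)) + 2^-1 * \sum_i l (r2 - ys i * (g (xs i) + b2)).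
    rewrite !mulr_sumr -big_split /=; apply: ler_sum => i _.
    have t0 : (0 : R) <= 2^-1 by rewrite invr_ge0 ler0n.
    have t1 : (2^-1 : R) <= 1 by rewrite invf_le1 // ?ler1n // ltr0n.
    have := lconv (r1 - ys i * (f (xs i) + b1)) (r2 - ys i * (g (xs i) + b2)) _ t0 t1.
    have -> : (1 - 2^-1 : R) = 2^-1 by field.
    have -> : 2^-1 * (r1 - ys i * (f (xs i) + b1)) + 2^-1 * (r2 - ys i * (g (xs i) + b2))
      = 2^-1 * r1 + 2^-1 * r2 - ys i * (2^-1 * f (xs i) + 2^-1 * g (xs i) + (2^-1 * b1 + 2^-1 * b2)) by ring.
    by [].
  move=> H.
  have ni : 0 <= nR^-1 by rewrite invr_ge0 ltW.
  have := ler_wpM2l ni H.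
  set A := \sum_i _; set B := \sum_i _; set C := \sum_i _.
  move=> H'.
  have E : nR^-1 * (2^-1 * B + 2^-1 * C) = 2^-1 * (nR^-1 * B) + 2^-1 * (nR^-1 * C) by ring.
  rewrite E in H'; lra.
Qed.

Definition Nset (e : R) := [set ip f f | f in Cset e].
Definition dd (e : R) := inf (Nset e).

Lemma Nset_inf {e : R} : 0 < e -> has_inf (Nset e).
Proof.
move=> e0; split; first by have [f Cf] := Cset_ne e0; exists (ip f f); exists f.
by exists 0 => _ [f [hf _ _] <-]; exact: ip_ge0.
Qed.

Lemma dd_le {e : R} {f} : 0 < e -> Cset e f -> dd e <= ip f f.
Proof. by move=> e0 Cf; apply: (ge_inf (Nset_inf e0).2); exists f. Qed.

Lemma dd_mono {e e' : R} : 0 < e -> e <= e' -> dd e' <= dd e.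
Proof.
move=> e0 ee; apply: lb_le_inf; first by have [f Cf] := Cset_ne e0; exists (ip f f); exists f.
move=> _ [f Cf <-]; apply: dd_le; [lra|exact: Cset_mono ee Cf].
Qed.

Definition eta (n : nat) : R := (n.+1%:R)^-1.

Lemma eta_gt0 n : 0 < eta n.
Proof. by rewrite /eta invr_gt0 ltr0Sn. Qed.

Lemma eta_mono {n m : nat} : (n <= m)%N -> eta m <= eta n.
Proof.
by move=> nm; rewrite /eta lef_pV2 ?posrE ?ltr0Sn // ler_nat.
Qed.

Lemma PE : exists f b rho, [/\ Hs f, ip f f <= lambda ^+ 2 &
  forall f' b' rho', Hs f' -> ip f' f' <= lambda ^+ 2 -> Fp f b rho <= Fp f' b' rho'].
Proof.
have lam0' := lam0.
have kap0 := kap_ge0.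
have [fs Hfs] : exists fs : nat -> Xt -> R, forall n, Cset (eta n) (fs n) /\ ip (fs n) (fs n) < dd (eta n) + eta n.
  have H : forall n, exists f, Cset (eta n) f /\ ip f f < dd (eta n) + eta n.
    move=> n; have [_ [f Cf <-] H] := inf_adherent (eta_gt0 n) (Nset_inf (eta_gt0 n)).
    by exists f.
  by have [fs Hfs] := choice H; exists fs.
have Hsn : forall n, Hs (fs n) by move=> n; case: (Hfs n) => [[]].
have ddb : forall n, dd (eta n) <= lambda ^+ 2.
  move=> n; case: (Hfs n) => Cf _; apply: le_trans (dd_le (eta_gt0 n) Cf) _.
  by case: Cf.
set DS := [set dd (eta n) | n in [set: nat]].
have hDS : has_sup DS.
  by split; [exists (dd (eta 0)); exists 0 | exists (lambda ^+ 2) => _ [n _ <-]; exact: ddb].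
set ds := sup DS.
have dds : forall n, dd (eta n) <= ds by move=> n; apply: (sup_upper_bound hDS); exists n.
have cauchy : forall e : R, 0 < e -> exists N, forall m n, (N <= m)%N -> (N <= n)%N ->
    hnorm ip (fun x => fs m x - fs n x) < e.
  move=> e e0; set c := e ^+ 2 / 8.
  have c0 : 0 < c by rewrite /c divr_gt0 ?exprn_gt0.
  have [_ [N1 _ <-] H1] := sup_adherent c0 hDS.
  rewrite -/ds in H1.
  have [N2 H2] := eta_small c0.
  exists (maxn N1 N2) => m n hm hn.
  set N := maxn N1 N2.
  have eN : eta N < c.
    by apply: le_lt_trans (eta_mono (leq_maxr N1 N2)) H2.
  have dN : ds - c < dd (eta N).
    by apply: lt_le_trans H1 _; apply: dd_mono; [exact: eta_gt0 | exact: eta_mono (leq_maxl _ _)].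
  have Cm : Cset (eta N) (fs m) by case: (Hfs m) => Cf _; apply: Cset_mono _ Cf; exact: eta_mono.
  have Cn : Cset (eta N) (fs n) by case: (Hfs n) => Cf _; apply: Cset_mono _ Cf; exact: eta_mono.
  have Cmid := Cset_mid Cm Cn.
  have hmid := dd_le (eta_gt0 N) Cmid.
  have bm : ip (fs m) (fs m) < ds + eta N.
    case: (Hfs m) => _ h; have := dds m; have := eta_mono hm; lra.
  have bn : ip (fs n) (fs n) < ds + eta N.
    case: (Hfs n) => _ h; have := dds n; have := eta_mono hn; lra.
  have := ip_mid (Hsn m) (Hsn n); have := ip_sub (Hsn m) (Hsn n).
  move=> E1 E2.
  have Hlt : ip (fun x => fs m x - fs n x) (fun x => fs m x - fs n x) < e ^+ 2.
    have -> : e ^+ 2 = 8 * c by rewrite /c; field.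
    lra.
  rewrite /hnorm -(ger0_norm (ltW e0)) -sqrtr_sqr ltr_sqrt //.
  by rewrite exprn_gt0.
have [f [hf conv]] := rkhs_complete HR Hsn cauchy.
have hff : ip f f <= lambda ^+ 2.
  apply: le_eps => e e0.
  set d := Num.min 1 (e / (2 * lambda + 1)).
  have h00 : 0 < e / (2 * lambda + 1) by apply: divr_gt0; lra.
  have d0 : 0 < d by rewrite /d lt_min ltr01 h00.
  have d1 : d <= 1 by rewrite /d ge_min lexx.
  have d2 : d <= e / (2 * lambda + 1) by rewrite /d ge_min lexx orbT.
  have [N HN] := conv d d0.
  have hN := HN N (leqnn N).
  set dn := fun x => fs N x - f x.
  have hdn : Hs dn by rewrite /dn; have := Hs_lin 1 (-1) (Hsn N) hf;
    have -> : (fun x => 1 * fs N x + -1 * f x) = (fun x => fs N x - f x) by apply: funext => x; ring.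
  have -> : f = (fun x => fs N x - dn x) by apply: funext => x; rewrite /dn; ring.
  rewrite ip_sub //.
  have hfN : ip (fs N) (fs N) <= lambda ^+ 2 by case: (Hfs N) => [[]].
  have c1 := CSle (Hsn N) hdn; have c2 := CS (Hsn N) hdn.
  have hnN := hn_f_le (Hsn N) hfN.
  have hnd : hn dn < d by [].
  have hnd0 := hn_ge0 dn.
  have sq := hn_sqr hdn.
  have e2 : (2 * lambda + 1) * d <= e.
    have p : 0 < 2 * lambda + 1 by lra.
    have := ler_wpM2l (ltW p) d2.
    by rewrite [X in _ <= X]mulrC divfK ?gt_eqF.
  have : - (2 * ip (fs N) dn) <= 2 * (lambda * d).
    have : `|ip (fs N) dn| <= lambda * d.
      apply: le_trans c2 _; apply: ler_pM => //; [exact: hn_ge0 | exact: ltW].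
    rewrite ler_norml => /andP [h1 h2]; lra.
  have : ip dn dn <= d.
    rewrite -sq; have : hn dn ^+ 2 <= hn dn * 1 by rewrite expr2 ler_wpM2l // ltW // (lt_le_trans hnd d1).
    nra.
  nra.
have hL : forall a, Sa a -> Lf f a <= Pst.
  move=> a Sa'; apply: le_eps => e e0.
  set d := e / (2 * (kap + 1)).
  have k0 := kap_ge0.
  have d0 : 0 < d by rewrite /d divr_gt0 //; lra.
  have e2 : 0 < e / 2 by lra.
  have [N1 HN1] := conv d d0.
  have [N2 HN2] := eta_small e2.
  set N := maxn N1 N2.
  have hN := HN1 N (leq_maxl _ _).
  have eN : eta N < e / 2 by apply: le_lt_trans (eta_mono (leq_maxr N1 N2)) HN2.
  have L1 : Lf (fs N) a <= Pst + eta N.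
    case: (Hfs N) => [[_ _ [b [rho H]]] _]; exact: le_trans (WD1 b rho Sa') H.
  set dn := fun x => fs N x - f x.
  have hdn : Hs dn.
    have := Hs_lin 1 (-1) (Hsn N) hf.
    by have -> : (fun x => 1 * fs N x + -1 * f x) = (fun x => fs N x - f x) by apply: funext => x; ring.
  have E : Lf f a = Lf (fs N) a + ip dn (wa a).
    rewrite /Lf /wa ip_W // /dn.
    have -> : \sum_i a i * ys i * (fs N (xs i) - f (xs i)) =
      \sum_i a i * ys i * fs N (xs i) - \sum_i a i * ys i * f (xs i).
      by rewrite -sumrB; apply: eq_bigr => i _; ring.
    ring.
  have wb : hn (wa a) <= kap.
    apply: W_bound => i; case: (Sa') => a0 _ _; have := Sa_le1 a i Sa'; have := a0 i.
    rewrite normrM; case: (hy i) => ->; rewrite ?normrN normr1 mulr1 ger0_norm //.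
  have c1 := CSle hdn (Hs_W (fun i => a i * ys i)).
  have : ip dn (wa a) <= d * kap.
    apply: le_trans c1 _; apply: ler_pM => //; [exact: hn_ge0 | exact: hn_ge0 | exact: ltW].
  have : d * kap <= e / 2.
    rewrite /d; apply: (le_trans (y := e / (2 * (kap + 1)) * (kap + 1))).
      by apply: ler_wpM2l; [exact: ltW | lra].
    have -> : e / (2 * (kap + 1)) * (kap + 1) = e / 2 by field; lra.
    by [].
  rewrite E; lra.
have [b [rho [a [Sa' E]]]] := IL f.
exists f, b, rho; split => // f' b' rho' hf' hff'.
by rewrite E; apply: le_trans (hL a Sa') (Pst_le f' b' rho' hf' hff').
Qed.

Lemma sqrt_tan (x y : R) : 0 < x -> 0 <= y ->
  Num.sqrt y <= Num.sqrt x + (y - x) * (Num.sqrt x)^-1 / 2.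
Proof.
move=> x0 y0.
have sx : 0 < Num.sqrt x by rewrite sqrtr_gt0.
have ex := sqr_sqrtr (ltW x0); have ey := sqr_sqrtr y0.
set a := Num.sqrt x in sx ex *; set b := Num.sqrt y in ey *.
have b0 : 0 <= b := sqrtr_ge0 y.
rewrite -ex -ey.
have -> : a + (b ^+ 2 - a ^+ 2) * a^-1 / 2 = (a ^+ 2 + b ^+ 2) / (2 * a) by field; rewrite gt_eqF.
rewrite ler_pdivlMr; last by rewrite mulr_gt0.
have := sqr_ge0 (a - b); rewrite !expr2; lra.
Qed.

Definition De (e : R) (a : 'I_m1 -> R) := - (lambda * Num.sqrt (ip (wa a) (wa a) + e ^+ 2)) - Ee a.

Lemma De_le e a : De e a <= Dd a.
Proof.
rewrite /De /Dd /hn lerD2r lerN2; apply: ler_wpM2l; first exact: ltW.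
rewrite ler_sqrt; last by apply: addr_ge0; [exact: ip_ge0 (Hs_W _) | exact: sqr_ge0].
by rewrite lerDl sqr_ge0.
Qed.

Lemma Fp0_bound a : Sa a -> Dd a <= Fp (fun _ => 0) 0 0.
Proof.
move=> Sa'.
have h1 : ip (fun _ => 0) (fun _ => 0) <= lambda ^+ 2 by rewrite ip00 sqr_ge0.
have h2 := WD2 Hs0 h1 Sa'.
have h3 := @WD1 (fun _ => 0) 0 0 a Sa'.
exact: le_trans h2 h3.
Qed.

Lemma DSe_sup e : has_sup [set De e a | a in Sa].
Proof.
split; first by have [a Sa'] := Sa_ex; exists (De e a); exists a.
exists (Fp (fun _ => 0) 0 0) => _ [a Sa' <-].
exact: le_trans (De_le e a) (Fp0_bound a Sa').
Qed.

Lemma ip_scale c f : Hs f -> ip (fun x => c * f x) (fun x => c * f x) = c ^+ 2 * ip f f.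
Proof.
move=> hf; have -> : (fun x => c * f x) = (fun x => c * f x + 0 * f x).
  by apply: funext => x; ring.
rewrite ipq2 //; ring.
Qed.

Lemma SD {Fs : R} : (forall f b rho, Hs f -> ip f f <= lambda ^+ 2 -> Fs <= Fp f b rho) ->
  forall eta, 0 < eta -> exists a, Sa a /\ Fs - eta <= Dd a.
Proof.
move=> HFs eta eta0.
have {eta eta0} [eta eta0 ->] : exists2 e : R, 0 < e & eta = e by exists eta.
have lam0' := lam0; have kap0 := kap_ge0.
set C := 1 + lambda + lambda * kap ^+ 2.
have C0 : 0 <= C by rewrite /C; have := sqr_ge0 kap; nra.
set ep := Num.min 1 (eta / (C + 1)).
have h00 : 0 < eta / (C + 1) by apply: divr_gt0; lra.
have ep0 : 0 < ep by rewrite /ep lt_min ltr01 h00.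
have ep1 : ep <= 1 by rewrite /ep ge_min lexx.
have ep2 : (C + 1) * ep <= eta.
  have p : 0 < C + 1 by lra.
  have : ep <= eta / (C + 1) by rewrite /ep ge_min lexx orbT.
  move=> /(ler_wpM2l (ltW p)).
  by rewrite [X in _ <= X]mulrC divfK ?gt_eqF.
set sig := sup [set De ep a | a in Sa].
have hS := DSe_sup ep.
have key : Fs <= sig + C * ep.
  have ep3 : 0 < ep ^+ 3 by rewrite exprn_gt0.
  have [_ [aS Sas <-] Has] := sup_adherent ep3 hS.
  rewrite -/sig in Has.
  have Das : De ep aS <= sig by apply: (sup_upper_bound hS); exists aS.
  set u := wa aS.
  have hu : Hs u := Hs_W _.
  set N : R := Num.sqrt (ip u u + ep ^+ 2).
  have iuu0 := ip_ge0 hu.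
  have ep20 : 0 < ep ^+ 2 by rewrite exprn_gt0.
  have N0 : 0 < N by rewrite sqrtr_gt0; lra.
  have N2 : N ^+ 2 = ip u u + ep ^+ 2 by rewrite sqr_sqrtr //; have := sqr_ge0 ep; lra.
  set iN : R := N^-1.
  have NiN : N * iN = 1 by rewrite /iN mulfV // gt_eqF.
  have iN0 : 0 < iN by rewrite /iN invr_gt0.
  have iNN : iN * N = 1 by rewrite mulrC.
  have NeP : ep <= N.
    have : ep ^+ 2 <= N ^+ 2 by rewrite N2; lra.
    rewrite !expr2 => h; nra.
  have epiN : ep * iN <= 1.
    have := ler_wpM2r (ltW iN0) NeP; rewrite NiN //.
  set f := fun x => lambda * iN * u x.
  have hf : Hs f by apply: (rkhs_scale HR).
  have hff : ip f f <= lambda ^+ 2.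
    rewrite /f ip_scale //.
    have : (lambda * iN) ^+ 2 * ip u u <= (lambda * iN) ^+ 2 * N ^+ 2.
      by apply: ler_wpM2l; [exact: sqr_ge0 | rewrite N2; have := sqr_ge0 ep; lra].
    have E : (lambda * iN) ^+ 2 * N ^+ 2 = lambda ^+ 2.
      by rewrite -exprMn -mulrA iNN mulr1.
    by rewrite E.
  have mainineq : forall a, Sa a -> Lf f a <= sig + C * ep.
    move=> a Sa'.
    set t : R := ep ^+ 2.
    have t0 : 0 < t by rewrite exprn_gt0.
    have t1 : t <= 1 by rewrite /t expr2; nra.
    set aT : 'I_m1 -> R := fun i => (1 - t) * aS i + t * a i.
    have Sat : Sa aT := Sa_conv Sas Sa' (ltW t0) t1.
    have Dat : De ep aT <= sig by apply: (sup_upper_bound hS); exists aT.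
    set d := W (fun i => (a i - aS i) * ys i).
    have hd : Hs d := Hs_W _.
    have hnd : hn d <= kap by apply: W_bound; exact: diff_bound.
    have idd : ip d d <= kap ^+ 2.
      rewrite -(hn_sqr hd); have := hn_ge0 d; rewrite !expr2 => ?; nra.
    have idd0 := ip_ge0 hd.
    have Ewt : ip (wa aT) (wa aT) = ip u u + 2 * t * ip u d + t ^+ 2 * ip d d.
      by rewrite /aT wa_conv ipq2 //; ring.
    have sq := @sqrt_tan (ip u u + ep ^+ 2) (ip (wa aT) (wa aT) + ep ^+ 2).
    have sq' : Num.sqrt (ip (wa aT) (wa aT) + ep ^+ 2) <= N + (2 * t * ip u d + t ^+ 2 * ip d d) * iN / 2.
      have pos1 : 0 < ip u u + ep ^+ 2 by rewrite -N2 exprn_gt0.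
      have pos2 : 0 <= ip (wa aT) (wa aT) + ep ^+ 2.
        by apply: addr_ge0; [exact: ip_ge0 (Hs_W _) | exact: sqr_ge0].
      have := sq pos1 pos2; rewrite -/N -/iN Ewt.
      by have -> : ip u u + 2 * t * ip u d + t ^+ 2 * ip d d + ep ^+ 2 - (ip u u + ep ^+ 2)
        = 2 * t * ip u d + t ^+ 2 * ip d d by ring.
    have Eat := Ee_conv Sas Sa' (ltW t0) t1.
    have lsq := ler_wpM2l (ltW lam0) sq'.
    have I1 : - (lambda * t * ip u d * iN) - lambda * t ^+ 2 * ip d d * iN / 2 + t * Ee aS - t * Ee a < ep ^+ 3.
      move: Dat Has Eat lsq; rewrite /De -/u -/N -/aT.
      move=> h1 h2 h3 h4.
      have E4 : lambda * (N + (2 * t * ip u d + t ^+ 2 * ip d d) * iN / 2)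
        = lambda * N + lambda * t * ip u d * iN + lambda * t ^+ 2 * ip d d * iN / 2 by field.
      rewrite E4 in h4.
      lra.
    set Xx := - (lambda * ip u d * iN) - lambda * ep ^+ 2 * ip d d * iN / 2 + Ee aS - Ee a.
    have I2 : Xx < ep.
      have : ep ^+ 2 * Xx < ep ^+ 2 * ep.
        have -> : ep ^+ 2 * ep = ep ^+ 3 by rewrite -exprSr.
        have -> : ep ^+ 2 * Xx = - (lambda * t * ip u d * iN) - lambda * t ^+ 2 * ip d d * iN / 2 + t * Ee aS - t * Ee a.
          by rewrite /Xx /t; field.
        exact: I1.
      by rewrite ltr_pM2l // exprn_gt0.
    have Lfa : Lf f a = - (lambda * N) + lambda * ep ^+ 2 * iN - lambda * ip u d * iN - Ee a.
      rewrite /Lf -(ip_W _ hf) /f.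
      rewrite ipZl //; last exact: Hs_W.
      have -> : W (fun i => a i * ys i) = (fun x => 1 * u x + 1 * d x).
        have := wa_conv aS a 1.
        have -> : (fun i => (1 - 1) * aS i + 1 * a i) = a by apply: funext => i; ring.
        move=> H; exact: H.
      rewrite ipLr //.
      have -> : ip u u = N ^+ 2 - ep ^+ 2 by rewrite N2; ring.
      have -> : lambda * iN * (1 * (N ^+ 2 - ep ^+ 2) + 1 * ip u d)
        = lambda * (N * iN) * N - lambda * ep ^+ 2 * iN + lambda * ip u d * iN by ring.
      rewrite NiN; ring.
    have b1 : lambda * ep ^+ 2 * iN <= lambda * ep.
      have -> : lambda * ep ^+ 2 * iN = lambda * ep * (ep * iN) by ring.
      by rewrite -[X in _ <= X]mulr1; apply: ler_wpM2l => //; apply: mulr_ge0; lra.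
    have b2 : lambda * ep ^+ 2 * ip d d * iN / 2 <= lambda * ep * kap ^+ 2.
      have -> : lambda * ep ^+ 2 * ip d d * iN / 2 = (lambda * ep * ip d d / 2) * (ep * iN) by ring.
      apply: (le_trans (y := lambda * ep * ip d d / 2)).
        rewrite -[X in _ <= X]mulr1; apply: ler_wpM2l => //.
        by apply: divr_ge0; [apply: mulr_ge0; [apply: mulr_ge0; lra|] |].
      have : lambda * ep * ip d d <= lambda * ep * kap ^+ 2.
        by apply: ler_wpM2l => //; apply: mulr_ge0; lra.
      have : 0 <= lambda * ep * ip d d by apply: mulr_ge0 => //; apply: mulr_ge0; lra.
      lra.
    have Dase : - (lambda * N) - Ee aS <= sig by move: Das; rewrite /De -/u -/N.
    rewrite Lfa /C.
    have -> : (1 + lambda + lambda * kap ^+ 2) * ep = ep + lambda * ep + lambda * ep * kap ^+ 2 by ring.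
    move: I2; rewrite /Xx => I2.
    lra.
  have [b [rho [a' [Sa' E]]]] := IL f.
  apply: le_trans (HFs f b rho hf hff) _.
  by rewrite E; exact: mainineq.
have [_ [a Sa' <-] Ha] := sup_adherent ep0 hS.
rewrite -/sig in Ha.
exists a; split => //.
apply: le_trans (De_le ep a).
have : C * ep + ep <= eta by lra.
lra.
Qed.

Lemma fpn_wa a : (fun x => \sum_(i | ys i == 1) a i * k x (xs i) - \sum_(i | ys i == -1) a i * k x (xs i)) = wa a.
Proof.
apply: funext => x; rewrite /wa /W split_sum; congr (_ + _).
  by apply: eq_bigr => i /eqP ->; ring.
by rewrite -sumrN; apply: eq_bigr => i /eqP ->; ring.
Qed.

Lemma Ee_split a : Ee a = nR^-1 * \sum_(i | ys i == 1) lc (nR * a i) + nR^-1 * \sum_(i | ys i == -1) lc (nR * a i).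
Proof. by rewrite /Ee split_sum mulrDr. Qed.

Lemma fconj_sum (s : R) a : (forall i, ys i = s -> 0 <= a i) ->
  \sum_(i | ys i == s) fconj l (nR * a i) = (\sum_(i | ys i == s) lc (nR * a i))%:E.
Proof.
move=> h; rewrite -sumEFin; apply: eq_bigr => i /eqP yi.
by rewrite fconj_lc //; apply: mulr_ge0; [exact: ltW nR0 | exact: h].
Qed.

Lemma main_result : exists f b rho, [/\ Hs f, ip f f <= lambda ^+ 2,
      (forall (f' : Xt -> R) (b' rho' : R), Hs f' -> ip f' f' <= lambda ^+ 2 ->
         primal_obj l xs ys f b rho <= primal_obj l xs ys f' b' rho') &
      (primal_obj l xs ys f b rho)%:E =
      (- ereal_inf [set r : \bar R | exists (cp cn : R) (fp fn : Xt -> R),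
          [/\ Uset k l xs ys 1 cp fp, Uset k l xs ys (-1) cn fn &
              r = (cp + cn + lambda * hnorm ip (fun x => fp x - fn x))%:E]])%E].
Proof.
have [f [b [rho [hf hff opt]]]] := PE.
exists f, b, rho; split => //.
have -> : primal_obj l xs ys f b rho = Fp f b rho by [].
set Fs := Fp f b rho.
set Dset := [set r : \bar R | _].
suff -> : ereal_inf Dset = (- Fs)%:E by rewrite EFinN oppeK.
apply/eqP; rewrite eq_le; apply/andP; split.
- apply/lee_addgt0Pr => e e0.
  have {e e0} [e e0 ->] : exists2 e' : R, 0 < e' & e = e' by exists e.
  have [a [Sa' Ha]] := SD opt e e0.
  case: (Sa') => a0 a1 a2.
  set cp := nR^-1 * \sum_(i | ys i == 1) lc (nR * a i).
  set cn := nR^-1 * \sum_(i | ys i == -1) lc (nR * a i).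
  set fp := fun x => \sum_(i | ys i == 1) a i * k x (xs i).
  set fn := fun x => \sum_(i | ys i == -1) a i * k x (xs i).
  apply: le_trans (ereal_inf_lbound (x := (cp + cn + lambda * hnorm ip (fun x => fp x - fn x))%:E) _) _.
    exists cp, cn, fp, fn; split => //.
    + exists a; split; first by move=> i _; exact: a0.
      split; first exact: a1.
      split; last by [].
      rewrite -/nR fconj_sum; last by move=> i _; exact: a0.
      by rewrite -EFinM lee_fin.
    + exists a; split; first by move=> i _; exact: a0.
      split; first exact: a2.
      split; last by [].
      rewrite -/nR fconj_sum; last by move=> i _; exact: a0.
      by rewrite -EFinM lee_fin.
  rewrite -EFinD lee_fin.
  have -> : (fun x => fp x - fn x) = wa a by rewrite /fp /fn fpn_wa.
  have : cp + cn = Ee a by rewrite Ee_split.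
  move: Ha; rewrite /Dd /hnorm /hn -/Fs; lra.
- apply: le_ereal_inf_tmp => _ [cp [cn [fp [fn [[ap [ap0 [ap1 [ap2 ->]]]] [an [an0 [an1 [an2 ->]]]] ->]]]]].
  rewrite -/nR in ap2 an2.
  rewrite fconj_sum // -EFinM lee_fin in ap2.
  rewrite fconj_sum // -EFinM lee_fin in an2.
  set a := fun i => if ys i == 1 then ap i else an i.
  have Sa' : Sa a.
    split.
    - by move=> i; rewrite /a; case: (hy i) => yi; rewrite yi ?eqxx ?m1_one; [exact: ap0 | exact: an0].
    - by rewrite -[X in _ = X]ap1; apply: eq_bigr => i /eqP yi; rewrite /a yi eqxx.
    - by rewrite -[X in _ = X]an1; apply: eq_bigr => i /eqP yi; rewrite /a yi m1_one.
  have Ep : \sum_(i | ys i == 1) lc (nR * ap i) = \sum_(i | ys i == 1) lc (nR * a i).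
    by apply: eq_bigr => i /eqP yi; rewrite /a yi eqxx.
  have En : \sum_(i | ys i == -1) lc (nR * an i) = \sum_(i | ys i == -1) lc (nR * a i).
    by apply: eq_bigr => i /eqP yi; rewrite /a yi m1_one.
  have Wd : (fun x => \sum_(i | ys i == 1) ap i * k x (xs i) - \sum_(i | ys i == -1) an i * k x (xs i)) = wa a.
    rewrite -fpn_wa; apply: funext => x; congr (_ - _); apply: eq_bigr => i /eqP yi; rewrite /a yi ?eqxx ?m1_one //.
  rewrite Wd lee_fin.
  have h1 := WD2 hf hff Sa'.
  have h2 := @WD1 f b rho a Sa'.
  have h3 := Ee_split a.
  rewrite Ep in ap2; rewrite En in an2.
  move: h1; rewrite /Dd /hnorm /hn; rewrite -/Fs in h2; lra.
Qed.

End All.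

Theorem lemma1 (R : realType) (X : pseudoMetricType R)
  (k : X -> X -> R) (K : R) (Hs : set (X -> R)) (ip : (X -> R) -> (X -> R) -> R)
  (l : R -> R) (m1 : nat) (xs : 'I_m1 -> X) (y : 'I_m1 -> R) (lambda : R) :
  hausdorff_space X ->
  compact [set: X] ->
  continuous (fun p : X * X => k p.1 p.2) ->
  is_RKHS k Hs ip ->
  universal_space Hs ->
  (forall x, Num.sqrt (k x x) <= K) ->
  {homo l : a b / a <= b} ->
  convex_fun l ->
  (forall z, 0 <= l z) ->
  (forall M : R, 0 < M -> exists z0 : R, forall z g : R,
      z0 <= z -> subgrad l z g -> M <= g) ->
  (forall i, y i = 1 \/ y i = -1) ->
  (exists i, y i = 1) ->
  (exists i, y i = -1) ->
  0 < lambda ->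
  exists (f : X -> R) (b rho : R),
    [/\ Hs f, ip f f <= lambda ^+ 2,
      (forall (f' : X -> R) (b' rho' : R), Hs f' -> ip f' f' <= lambda ^+ 2 ->
         primal_obj l xs y f b rho <= primal_obj l xs y f' b' rho') &
      (primal_obj l xs y f b rho)%:E =
      (- ereal_inf [set r : \bar R | exists (cp cn : R) (fp fn : X -> R),
          [/\ Uset k l xs y 1 cp fp, Uset k l xs y (-1) cn fn &
              r = (cp + cn + lambda * hnorm ip (fun x => fp x - fn x))%:E]])%E].
Proof.
move=> _ _ _ HR _ _ lmono lconv lpos lgrow hy hp hn lam0.
exact: (@main_result R X k Hs ip l m1 xs y lambda HR lmono lconv lpos lgrow hy hp hn lam0).
Qed.
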